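(* Let $N\ge 1$ and $k\ge 1$ be integers, let $\beta>0$, and let $\psi_1,\dots,\psi_N\in\mathbb{R}$ be contribution estimates of nodes $i\in[N]$ (the quantities $\beta,\psi_i$ may depend on an accuracy parameter $\epsilon>0$). Define $\varrho_i=\exp(\psi_i/\beta)/\sum_{i'\in[N]}\exp(\psi_{i'}/\beta)$, $q_i=1-(1-\varrho_i)^k$, $\Gamma_i=\sum_{\gamma=0}^{\infty}\gamma\,(1-q_i)^{\gamma}=(1-q_i)/q_i^2$, and $C_i=c(\epsilon)+\Gamma_i$, where $c(\epsilon)=\mathcal{O}(1/\epsilon)$ is common to all nodes. Let $i_*\in\arg\min_{i\in[N]}\psi_i$. If $\Gamma_{i_*}=\mathcal{O}(1/\epsilon)$, then $C_i=\mathcal{O}(1/\epsilon)$ for all $i\in[N]$.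
   Context: Setting: federated learning with $N$ nodes; after a contribution-evaluation phase, each node $i$ has a contribution estimate $\psi_i$. In each subsequent iteration $k$ nodes are sampled with replacement according to $(\varrho_i)$ and synchronize with the latest global model. $\Gamma_i$ is node $i$'s expected staleness (iterations since last synchronization), $c(\epsilon)$ is the expected number of iterations for the global model to reach $\epsilon$-accuracy (of order $\mathcal{O}(1/\epsilon)$ as $\epsilon\to 0$), and $C_i=c(\epsilon)+\Gamma_i$ is node $i$'s expected convergence complexity. Asymptotic notation is as $\epsilon\to 0$. *)

(* Defs.v *)
From HB Require Import structures.
From mathcomp Require Import all_boot all_order all_algebra.
From mathcomp Require Import all_classical all_reals all_analysis.
Set Implicit Arguments. Unset Strict Implicit. Unset Printing Implicit Defensive.
Import Order.TTheory GRing.Theory Num.Theory.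
Local Open Scope ring_scope.

Section Defs.
Variables (R : realType) (N : nat).

Definition rho (beta : R) (psi : 'I_N -> R) (i : 'I_N) : R :=
  expR (psi i / beta) / \sum_(j < N) expR (psi j / beta).

(* probability that node i is sampled at least once among k draws with replacement *)
Definition qprob (k : nat) (beta : R) (psi : 'I_N -> R) (i : 'I_N) : R :=
  1 - (1 - rho beta psi i) ^+ k.

(* expected staleness Gamma_i = sum_gamma gamma (1-q_i)^gamma = (1-q_i)/q_i^2 *)
Definition Gamma (k : nat) (beta : R) (psi : 'I_N -> R) (i : 'I_N) : R :=
  (1 - qprob k beta psi i) / (qprob k beta psi i) ^+ 2.

End Defs.

Definition bigO_inv (R : realType) (f : R -> R) : Prop :=
  exists M delta : R, 0 < delta /\
    forall e : R, 0 < e -> e < delta -> `|f e| <= M / e.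

(* Main.v *)
Require Import Defs.
From HB Require Import structures.
From mathcomp Require Import all_boot all_order all_algebra.
From mathcomp Require Import all_classical all_reals all_analysis.
Import Order.TTheory GRing.Theory Num.Theory.
Local Open Scope ring_scope.

Lemma gam_anti {R : realType} (q1 q2 : R) : 0 < q1 -> q1 <= q2 -> q2 <= 1 ->
  (1 - q2) / q2 ^+ 2 <= (1 - q1) / q1 ^+ 2.
Proof.
move=> h1 h12 h2.
have h2p : 0 < q2 by apply: lt_le_trans h12.
apply: (@le_trans _ _ ((1 - q1) / q2 ^+ 2)).
  apply: ler_wpM2r; first by rewrite invr_ge0 exprn_ge0 // ltW.
  by rewrite lerB.
apply: ler_wpM2l; first by rewrite subr_ge0 (le_trans h12).
rewrite lef_pV2 ?posrE ?exprn_gt0 //.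
by apply: lerXn2r => //; rewrite nnegrE ltW.
Qed.

Lemma rho_bounds {R : realType} {N : nat} (beta : R) (psi : 'I_N -> R) i :
  0 < rho beta psi i /\ rho beta psi i <= 1.
Proof.
rewrite /rho.
have hs : \sum_(j < N) expR (psi j / beta) =
   expR (psi i / beta) + \sum_(j < N | j != i) expR (psi j / beta).
  by rewrite (bigD1 i).
have hge : 0 <= \sum_(j < N | j != i) expR (psi j / beta).
  by apply: sumr_ge0 => j _; apply: ltW; apply: expR_gt0.
have hpos : 0 < \sum_(j < N) expR (psi j / beta).
  by rewrite hs; apply: ltr_wpDr => //; apply: expR_gt0.
split; first by apply: divr_gt0 => //; apply: expR_gt0.
rewrite ler_pdivrMr // mul1r hs lerDl //.
Qed.

Lemma rho_mono {R : realType} {N : nat} (beta : R) (psi : 'I_N -> R) i j :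
  0 < beta -> psi i <= psi j -> rho beta psi i <= rho beta psi j.
Proof.
move=> hb hij; rewrite /rho.
have hpos : 0 < \sum_(j < N) expR (psi j / beta).
  case: N psi i j hij => [|n] psi i j _; first by case: i.
  rewrite big_ord_recl. apply: ltr_wpDr; [by apply: sumr_ge0 => l _; apply: ltW; apply: expR_gt0 | exact: expR_gt0].
apply: ler_wpM2r; first by rewrite invr_ge0 ltW.
by rewrite ler_expR ler_pM2r // invr_gt0.
Qed.

Lemma q_bounds {R : realType} {N k : nat} (beta : R) (psi : 'I_N -> R) i :
  (1 <= k)%N -> 0 < qprob k beta psi i /\ qprob k beta psi i <= 1.
Proof.
move=> hk; have [h1 h2] := rho_bounds beta psi i.
rewrite /qprob; split.
  rewrite subr_gt0 exprn_ilt1 ?subr_ge0 //; last by rewrite ltrBlDr ltrDl.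
  by rewrite -lt0n.
by rewrite lerBlDr lerDl exprn_ge0 // subr_ge0.
Qed.

Lemma q_mono {R : realType} {N k : nat} (beta : R) (psi : 'I_N -> R) i j :
  0 < beta -> psi i <= psi j -> qprob k beta psi i <= qprob k beta psi j.
Proof.
move=> hb hij; rewrite /qprob lerB //.
have [_ h1] := rho_bounds beta psi j.
apply: lerXn2r; rewrite ?nnegrE ?subr_ge0 //.
  by have [_ ->] := rho_bounds beta psi i.
by rewrite lerB // rho_mono.
Qed.

Lemma Gamma_mono {R : realType} {N k : nat} (beta : R) (psi : 'I_N -> R) i j :
  (1 <= k)%N -> 0 < beta -> psi i <= psi j ->
  0 <= Gamma k beta psi j <= Gamma k beta psi i.
Proof.
move=> hk hb hij; rewrite /Gamma.
have [a1 a2] := q_bounds beta psi i hk.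
have [b1 b2] := q_bounds beta psi j hk.
apply/andP; split.
  by apply: divr_ge0; rewrite ?subr_ge0 // exprn_ge0 // ltW.
by apply: gam_anti => //; apply: q_mono.
Qed.

Theorem proposition3 (R : realType) (N k : nat) (hN : (1 <= N)%N) (hk : (1 <= k)%N)
  (beta : R -> R) (psi : R -> 'I_N -> R) (c : R -> R) (istar : R -> 'I_N) :
  (forall e : R, 0 < e -> 0 < beta e) ->
  (forall e : R, 0 < e -> forall i : 'I_N, psi e (istar e) <= psi e i) ->
  bigO_inv c ->
  bigO_inv (fun e => Gamma k (beta e) (psi e) (istar e)) ->
  forall i : 'I_N, bigO_inv (fun e => c e + Gamma k (beta e) (psi e) i).
Proof.
move=> hb hmin [M1 [d1 [hd1 hc]]] [M2 [d2 [hd2 hg]]] i.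
exists (M1 + M2), (Num.min d1 d2); split; first by rewrite lt_min hd1 hd2.
move=> e he; rewrite lt_min => /andP[e1 e2].
have /andP[g0 gle] := @Gamma_mono _ _ k (beta e) (psi e) (istar e) i hk (hb e he) (hmin e he i).
have := hc e he e1; have := hg e he e2.
rewrite (ger0_norm (le_trans g0 gle)) => H2 H1.
rewrite mulrDl; apply: (le_trans (ler_normD _ _)).
by rewrite (ger0_norm g0); apply: lerD => //; apply: le_trans H2.
Qed.
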